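(* If $\mathcal{I}$ is an ideal on $\mathbf{N}$, then $$c_0(\mathcal{I})\cap\ell_\infty=\Big\{x\in\ell_\infty:\int_{\mathbf{N}}|x|\,\mathrm{d}\mu=0\text{ for all }\mu\in\mathrm{M}(\mathcal{I})\Big\}.$$
   Context: An ideal on $\mathbf{N}$ is a family of subsets closed under subsets and finite unions, not containing $\mathbf{N}$, and containing all finite sets. $c_0(\mathcal{I})$ is the set of real sequences $x$ with $\{n:|x_n|\ge\varepsilon\}\in\mathcal{I}$ for every $\varepsilon>0$; $\ell_\infty$ is the space of bounded real sequences. $\mathrm{M}(\mathcal{I})$ is the set of finitely additive probability measures $\mu$ on $\mathcal{P}(\mathbf{N})$ with $\mu(A)=0$ for all $A\in\mathcal{I}$, and $\int_{\mathbf{N}}x\,\mathrm{d}\mu$ is the usual integral of a bounded sequence against a finitely additive measure. *)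

(* Defs.v *)
From HB Require Import structures.
From mathcomp Require Import all_boot all_order all_algebra.
From mathcomp Require Import all_classical all_reals.
Set Implicit Arguments. Unset Strict Implicit. Unset Printing Implicit Defensive.
Import Order.TTheory GRing.Theory Num.Theory.
Local Open Scope classical_set_scope.
Local Open Scope ring_scope.

Definition ideal (I : set (set nat)) : Prop :=
  [/\ (forall A B : set nat, B `<=` A -> I A -> I B),
      (forall A B : set nat, I A -> I B -> I (A `|` B)),
      ~ I setT &
      (forall A : set nat, finite_set A -> I A)].

Section Defs.
Variable R : realType.

Definition c0 (I : set (set nat)) (x : nat -> R) : Prop :=
  forall eps : R, 0 < eps -> I [set n | eps <= `|x n|].

Definition bounded_seq (x : nat -> R) : Prop :=
  exists M : R, forall n, `|x n| <= M.

Definition fa_prob (mu : set nat -> R) : Prop :=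
  [/\ mu setT = 1,
      (forall A, 0 <= mu A) &
      (forall A B, A `&` B = set0 -> mu (A `|` B) = mu A + mu B)].

Definition MI (I : set (set nat)) (mu : set nat -> R) : Prop :=
  fa_prob mu /\ (forall A, I A -> mu A = 0).

Definition finite_partition (P : seq (set nat)) : Prop :=
  (forall i j, (i < j < size P)%N -> nth set0 P i `&` nth set0 P j = set0) /\
  (forall n, exists i, (i < size P)%N /\ nth set0 P i n).

Definition lower_sum (mu : set nat -> R) (x : nat -> R) (P : seq (set nat)) : R :=
  \sum_(i < size P) inf (x @` nth set0 P i) * mu (nth set0 P i).

Definition fa_integral (mu : set nat -> R) (x : nat -> R) : R :=
  sup [set lower_sum mu x P | P in finite_partition].

End Defs.

(* Main.v *)
Require Import Defs.
From HB Require Import structures.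
From mathcomp Require Import all_boot all_order all_algebra.
From mathcomp Require Import all_classical all_reals.
From mathcomp Require Import lra.
Import Order.TTheory GRing.Theory Num.Theory.
Local Open Scope classical_set_scope.
Local Open Scope ring_scope.

Section Aux.
Variable R : realType.
Implicit Types (mu : set nat -> R) (x : nat -> R).

Lemma mu0 mu : fa_prob mu -> mu set0 = 0.
Proof.
case=> _ _ add; have := add set0 set0 (setI0 _); rewrite setU0 => h; lra.
Qed.

Lemma mu_le mu A B : fa_prob mu -> B `<=` A -> mu B <= mu A.
Proof.
move=> [_ pos add] BA; rewrite -(setDUK BA) add ?setDIK //.
have := pos (A `\` B); lra.
Qed.

Lemma sum_mu_part mu P : fa_prob mu -> finite_partition P ->
  \sum_(i < size P) mu (nth set0 P i) = 1.
Proof.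
move=> hmu [disj cov].
suff H : forall k, (k <= size P)%N -> \sum_(i < k) mu (nth set0 P i) =
    mu [set n | exists2 i, (i < k)%N & nth set0 P i n].
  rewrite H //; case: hmu => <- _ _; congr mu; apply/seteqP; split => n //= _.
  by have [i [Hi Hn]] := cov n; exists i.
elim=> [|k IH] Hk.
  rewrite big_ord0; rewrite (_ : [set _ | _] = set0) ?mu0 //.
  by apply/seteqP; split => n //= [].
rewrite big_ord_recr /= IH ?(ltnW Hk) //.
have -> : [set n | exists2 i, (i < k.+1)%N & nth set0 P i n] =
    [set n | exists2 i, (i < k)%N & nth set0 P i n] `|` nth set0 P k.
  apply/seteqP; split => n /=.
    move=> [i]; rewrite ltnS leq_eqVlt => /orP[/eqP -> | ik] Hn; first by right.
    by left; exists i.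
  by move=> [[i ik Hn]|Hn]; [exists i => //; apply: ltnW|exists k].
case: hmu => _ _ add; rewrite add //.
apply/seteqP; split => n //= [[i ik Hi] Hkn].
have := disj i k; rewrite ik Hk => /(_ isT) /seteqP[/(_ n) h _].
by apply: h.
Qed.

Lemma inf_ge0 x A : (forall n, 0 <= x n) -> 0 <= inf (x @` A).
Proof.
move=> x0; have [[a Aa]|nA] := pselect (A !=set0).
  by apply: lb_le_inf; [exists (x a), a|move=> _ [n _ <-]].
have -> : A = set0 by apply/seteqP; split => // a Aa; apply: nA; exists a.
by rewrite image_set0 inf0.
Qed.

Lemma inf_le x A a : (forall n, 0 <= x n) -> A a -> inf (x @` A) <= x a.
Proof.
move=> x0 Aa; apply: ge_inf; last by exists a.
by exists 0 => _ [n _ <-].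
Qed.

Lemma lower_sum_ge0 mu x P : fa_prob mu -> (forall n, 0 <= x n) ->
  0 <= lower_sum mu x P.
Proof.
move=> [_ pos _] x0; apply: sumr_ge0 => i _; apply: mulr_ge0 => //.
exact: inf_ge0.
Qed.

Lemma lower_sum_le mu x P c : fa_prob mu -> finite_partition P ->
  (forall i, (i < size P)%N ->
     inf (x @` nth set0 P i) * mu (nth set0 P i) <= c * mu (nth set0 P i)) ->
  lower_sum mu x P <= c.
Proof.
move=> hmu hP H; rewrite /lower_sum.
apply: le_trans.
  by apply: ler_sum => i _; apply: H.
by rewrite -mulr_sumr sum_mu_part // mulr1.
Qed.

Lemma part_T : finite_partition [:: @setT nat].
Proof. by split => [i j /andP[ij]|n]; [case: j ij => //|exists 0%N]. Qed.

Lemma part_AC (A : set nat) : finite_partition [:: A; ~` A].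
Proof.
split => [i j /andP[ij jl]|n].
  case: j ij jl => // -[|//] /=; case: i => //= _ _; exact: setICr.
have [An|nAn] := pselect (A n); first by exists 0%N.
by exists 1%N.
Qed.

End Aux.

Theorem proposition3p3 (R : realType) (I : set (set nat)) (hI : ideal I) :
  [set x : nat -> R | c0 I x /\ bounded_seq x] =
  [set x : nat -> R | bounded_seq x /\
     (forall mu : set nat -> R, MI I mu -> fa_integral mu (fun n => `|x n|) = 0)].
Proof.
case: hI => Isub Iun ITn Ifin.
have I0 : I set0 by apply: Ifin.
apply/seteqP; split => x /= [].
- move=> cx bx; split => // mu [hmu muI].
  rewrite /fa_integral; set S := (X in sup X).
  have x0 : forall n, 0 <= `|x n| by [].
  have ubeps : forall eps, 0 < eps -> ubound S eps.
    move=> eps eps0 _ [P hP <-]; apply: lower_sum_le => // i _.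
    have [lt|ge] := ltP (inf ((fun n => `|x n|) @` nth set0 P i)) eps.
      by apply: ler_wpM2r; [case: hmu|apply: ltW].
    have -> : mu (nth set0 P i) = 0.
      have [_ pos _] := hmu; apply: le_anti; rewrite pos andbT.
      rewrite -(muI _ (cx eps eps0)); apply: mu_le => // n Pn /=.
      by apply: (le_trans ge); apply: inf_le.
    by rewrite !mulr0.
  have Sne : S !=set0 by exists (lower_sum mu (fun n => `|x n|) [:: setT]), [:: setT]; first exact: part_T.
  have sup0 : 0 <= sup S.
    apply: (le_trans (@lower_sum_ge0 R mu _ [:: setT] hmu x0)).
    apply: ub_le_sup; first by exists 1; apply: ubeps.
    by exists [:: setT]; first exact: part_T.
  apply: le_anti; rewrite sup0 andbT.
  case: (leP (sup S) 0) => // sp.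
  have := ge_sup Sne (ubeps (sup S / 2) ltac:(lra)); lra.
- move=> [M bM] hint; split; last by exists M.
  move=> eps eps0; set A := [set n | eps <= `|x n|].
  apply: contrapT => nIA.
  pose F := [set B : set nat | I (A `\` B)].
  have FF : ProperFilter F.
    split; first by rewrite /F /= setD0.
    split.
    + by rewrite /F /= setDT.
    + move=> B C FB FC; rewrite /F /=.
      apply: (Isub _ _ _ (Iun _ _ FB FC)) => n [An]; rewrite /setI /=.
      by move=> /not_andP[]; [left|right].
    + move=> B C BC FB; apply: (Isub _ _ _ FB) => n [An nC]; split => //; exact: (fun h => nC (BC _ h)).
  have [U [UU FU]] := ultraFilterLemma FF.
  pose mu := fun B : set nat => if pselect (U B) then (1:R) else 0.
  have U0 : ~ U set0 by apply: filter_not_empty.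
  have UF : Filter U by exact: filter_filter.
  have hmu : fa_prob mu.
    split.
    + by rewrite /mu; case: pselect => // nT; exfalso; apply: nT; apply: filterT.
    + by move=> B; rewrite /mu; case: pselect.
    + move=> B C BC; rewrite /mu.
      case: pselect => [UBC|nUBC]; case: pselect => [UB|nUB];
        case: pselect => [UC|nUC] /=.
      * by exfalso; apply: U0; rewrite -BC; apply: filterI.
      * lra.
      * lra.
      * have [//|UnB] := in_ultra_setVsetC B UU.
        have [//|UnC] := in_ultra_setVsetC C UU.
        exfalso; apply: U0.
        have h : U ((B `|` C) `&` (~` B `&` ~` C)) by apply: filterI => //; apply: filterI.
        apply: filterS h => n [[Bn|Cn] [nB nC]]; [exact: nB|exact: nC].
      * by exfalso; apply: U0; rewrite -BC; apply: filterI.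
      * by exfalso; apply: nUBC; apply: filterS UB => n; left.
      * by exfalso; apply: nUBC; apply: filterS UC => n; right.
      * lra.
  have hMI : MI I mu.
    split => // J IJ; rewrite /mu; case: pselect => // UJ.
    exfalso; apply: U0.
    have UcJ : U (~` J).
      apply: FU; rewrite /F /=; apply: (Isub _ _ _ IJ) => n [_].
      by rewrite /setC /= => /contrapT.
    by rewrite -(setICr J); apply: filterI.
  have := hint mu hMI.
  rewrite /fa_integral; set S := (X in sup X).
  have UA : U A by apply: FU; rewrite /F /= setDv.
  have muA : mu A = 1 by rewrite /mu; case: pselect.
  have x0 : forall n, 0 <= `|x n| by [].
  have Ane : A !=set0.
    apply: contrapT => nA; apply: nIA.
    have -> : A = set0 by apply/seteqP; split => // a Aa; apply: nA; exists a.
    exact: I0.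
  have ubS : ubound S M.
    move=> _ [P hP <-]; apply: lower_sum_le => // i _.
    apply: ler_wpM2r; first by case: hmu.
    have [[a Pa]|nP] := pselect (nth set0 P i !=set0).
      by exact: (le_trans (@inf_le R _ _ _ x0 Pa)).
    have -> : nth set0 P i = set0.
      by apply/seteqP; split => // a Aa; apply: nP; exists a.
    by rewrite image_set0 inf0; apply: (le_trans _ (bM 0%N)).
  have : lower_sum mu (fun n => `|x n|) [:: A; ~` A] <= sup S.
    by apply: ub_le_sup; [exists M|exists [:: A; ~` A]; first exact: part_AC].
  have : eps <= lower_sum mu (fun n => `|x n|) [:: A; ~` A].
    rewrite /lower_sum (_ : size _ = 2%N) // !big_ord_recr big_ord0 /= add0r muA mulr1.
    have h2 : 0 <= inf ((fun n => `|x n|) @` ~` A) * mu (~` A).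
      by apply: mulr_ge0; [apply: inf_ge0|case: hmu].
    have h1 : eps <= inf ((fun n => `|x n|) @` A).
      case: Ane => a Aa; apply: lb_le_inf; first by exists `|x a|, a.
      by move=> _ [n An <-].
    by apply: (le_trans h1); rewrite lerDl.
  move=> h1 h2 h3; rewrite h3 in h2.
  by have := lt_le_trans eps0 (le_trans h1 h2); rewrite ltxx.
Qed.
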